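(* If a locally convex space $E$ has a countable radial network, then every uncountable subset of $E$ contains an infinite bounded subset.
   Context: A family $\mathcal N$ of subsets of a topological vector space $E$ is a radial network if for every neighborhood $U$ of zero and every $x\in E$ there exist $N\in\mathcal N$ and a nonzero real $\varepsilon$ with $\varepsilon x\in N\subseteq U$. A set $B$ is bounded if for every neighborhood $U$ of zero there is $n\in\mathbb N$ with $B\subseteq nU$. *)

(* Defs.v *)
From HB Require Import structures.
From mathcomp Require Import all_boot all_order all_algebra.
From mathcomp Require Import all_classical all_reals all_analysis.
Set Implicit Arguments. Unset Strict Implicit. Unset Printing Implicit Defensive.
Import Order.TTheory GRing.Theory Num.Theory.
Local Open Scope classical_set_scope.
Local Open Scope ring_scope.

Definition radial_network (R : realType) (E : tvsType R) (N : set (set E)) :=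
  forall (U : set E), nbhs (0 : E) U -> forall x : E,
    exists N0, N N0 /\ exists eps : R, eps != 0 /\ N0 (eps *: x) /\ N0 `<=` U.

Definition tvs_bounded (R : realType) (E : tvsType R) (B : set E) :=
  forall (U : set E), nbhs (0 : E) U ->
    exists n : nat, B `<=` [set (n%:R : R) *: u | u in U].

(* Main.v *)
Require Import Defs.
From HB Require Import structures.
From mathcomp Require Import all_boot all_order all_algebra.
From mathcomp Require Import all_classical all_reals all_analysis.
Import Order.TTheory GRing.Theory Num.Theory.
Local Open Scope classical_set_scope.
Local Open Scope ring_scope.

Section helpers.
Variables (R : realType) (E : tvsType R).

Lemma balanced_nbhs (U : set E) : nbhs (0 : E) U ->
  nbhs (0 : E) [set x | forall c : R, `|c| <= 1 -> U (c *: x)].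
Proof.
move=> U0.
have := @scale_continuous R E ((0:R^o), (0:E)) U.
rewrite /= scaler0 => /(_ U0) [] /= B [B1 B2] BU.
move/nbhs_ballP: B1 => [e /= e0 eB].
have e20 : (e / 2) != 0 by rewrite mulf_neq0 // ?gt_eqF // invr_eq0 pnatr_eq0.
apply: filterS (nbhs0Z e20 B2).
move=> _ [v Bv <-] c c1; rewrite scalerA.
apply: (BU (c * (e / 2), v)); split => //=; apply: eB.
rewrite /ball /= sub0r normrN normrM.
have he : `|e / 2| = e / 2 by rewrite ger0_norm // divr_ge0 // ltW.
rewrite he; apply: (le_lt_trans (ler_pM _ _ c1 (lexx _))) => //.
  by rewrite divr_ge0 // ltW.
by rewrite mul1r ltr_pdivrMr // ltr_pMr // ltr1n.
Qed.

Lemma absorb (W : set E) : nbhs (0 : E) W ->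
  forall x : E, exists n : nat, exists2 w, W w & x = n%:R *: w.
Proof.
move=> W0 x.
have := @scale_continuous R E ((0:R^o), x) W.
rewrite /= scale0r => /(_ W0) [] /= B [B1 B2] BU.
move/nbhs_ballP: B1 => [e /= e0 eB].
pose n := (Num.truncn e^-1).+1.
have n0 : (n%:R : R) != 0 by rewrite pnatr_eq0.
have n0' : (0 : R) < n%:R by rewrite ltr0n.
exists n, (n%:R^-1 *: x); last by rewrite scalerA divff // scale1r.
apply: (BU (n%:R^-1, x)); split => /=; last exact: nbhs_singleton.
apply: eB; rewrite /ball /= sub0r normrN ger0_norm; last by rewrite invr_ge0; apply: ltW.
rewrite invf_plt //.
have ei : (0:R) <= e^-1 by rewrite invr_ge0; apply: ltW.
by have /andP[_ ->] := truncn_itv ei.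
Qed.

End helpers.

Theorem theorem5p1 (R : realType) (E : tvsType R) :
  (exists N : set (set E), countable N /\ radial_network N) ->
  forall A : set E, ~ countable A ->
    exists B : set E, B `<=` A /\ infinite_set B /\ tvs_bounded B.
Proof.
move=> [N [cN rN]] A nA.
have [g ginj] := countable_injP _ cN.
pose f (k : nat) : set E :=
  if pselect (exists S, N S /\ g S = k) is left h then projT1 (cid h) else set0.
have fg S : N S -> f (g S) = S.
  move=> NS; rewrite /f; case: pselect => [h|hn]; last first.
    by exfalso; apply: hn; exists S.
  case: (cid h) => S' [NS' gS'] /=; apply: ginj => //; exact: mem_set.
pose P (x : E) (k m : nat) :=
  exists2 y, f k y & exists2 c : R, `|c| <= m%:R & x = c *: y.
pose mk x k : option nat :=
  if pselect (exists m, P x k m) is left h then Some (projT1 (cid h)) else None.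
have mkP x k m : mk x k = Some m -> P x k m.
  rewrite /mk; case: pselect => // h [<-]; exact: (projT2 (cid h)).
pose D x j := [seq mk x k | k <- iota 0 j].
pose C (d : seq (option nat)) : set E :=
  [set z | forall k m, (k < size d)%N -> nth None d k = Some m -> P z k m].
have DE x j k : (k < j)%N -> nth None (D x j) k = mk x k.
  by move=> kj; rewrite (nth_map 0%N) ?size_iota // nth_iota.
have sD x j : size (D x j) = j by rewrite size_map size_iota.
have CD x j : C (D x j) x.
  by move=> k m; rewrite sD => kj; rewrite DE // => /mkP.
have [xs Axs unc] : exists2 xs, A xs & forall j, ~ countable (A `&` C (D xs j)).
  apply: contrapT => H; apply: nA.
  have H' : forall x, A x -> exists j, countable (A `&` C (D x j)).
    move=> x Ax; apply: contrapT => hn; apply: H; exists x => // j cj.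
    by apply: hn; exists j.
  apply: (sub_countable (subset_card_le _)
    (bigcup_countable (D:=[set d | countable (A `&` C d)])
       (F:= fun d => A `&` C d) (countableP _) _)); last by move=> d.
  by move=> x Ax; have [j cj] := H' x Ax; exists (D x j) => //; split.
have hF : forall s : seq E, exists x, (A `&` C (D xs (size s))) x /\ x \notin s.
  move=> s; apply: contrapT => hn; apply: (unc (size s)).
  apply: (sub_countable (subset_card_le _) (finite_set_countable (finite_seq s))).
  move=> x Sx /=; apply: contrapT => xs'; apply: hn; exists x; split=> //.
  by apply/negP.
pose F s := projT1 (cid (hF s)).
have Fs s : (A `&` C (D xs (size s))) (F s) /\ F s \notin s := projT2 (cid (hF s)).
pose L n := iter n (fun s => F s :: s) [::].
have sL n : size (L n) = n by elim: n => //= n ->.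
pose x n := F (L n).
have xinL i j : (i < j)%N -> x i \in L j.
  elim: j => // j IH; rewrite ltnS leq_eqVlt => /orP[/eqP->|/IH].
    by rewrite /= in_cons eqxx.
  by rewrite /= in_cons => ->; rewrite orbT.
have xinj : injective x.
  move=> i j eij; case: (ltngtP i j) => // lt.
    by have := (Fs (L j)).2; rewrite -/(x j) -eij xinL.
  by have := (Fs (L i)).2; rewrite -/(x i) eij xinL.
exists (range x); split.
  by move=> _ [n _ <-]; have [] := (Fs (L n)).1.
split.
  apply/infiniteP.
  rewrite (card_le_eqr (@inj_card_eq _ _ setT x _)) ?card_lexx //.
  by move=> a b _ _; apply: xinj.
move=> U U0.
set W := [set y | forall c : R, `|c| <= 1 -> U (c *: y)].
have W0 : nbhs (0 : E) W := @balanced_nbhs R E U U0.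
have [N0 [NN0 [eps [eps0 [N0x N0W]]]]] := rN W W0 xs.
pose k := g N0.
have fk : f k = N0 := fg _ NN0.
have [m Pm] : exists m, P xs k m.
  exists (Num.truncn `|eps^-1|).+1; exists (eps *: xs); first by rewrite fk.
  exists eps^-1; last by rewrite scalerA mulVf // scale1r.
  by have /andP[_ /ltW] := truncn_itv (normr_ge0 eps^-1).
have [m' mkm] : exists m', mk xs k = Some m'.
  by rewrite /mk; case: pselect => [h|[]]; [eexists | exists m].
have Pj j : (k < j)%N -> exists2 c : R, `|c| <= m'%:R & exists2 w, W w & x j = c *: w.
  move=> kj; have := (Fs (L j)).1 => -[_ /(_ k m')].
  rewrite sD sL => /(_ kj); rewrite DE ?sL // => /(_ mkm) [y].
  by rewrite fk => /N0W Wy [c cm xj]; exists c => //; exists y => //; rewrite /x xj.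
have ab j : exists n : nat, exists2 w, W w & x j = n%:R *: w := @absorb R E W W0 (x j).
pose nj j := projT1 (cid (ab j)).
pose M := (m' + \sum_(j < k.+1) nj j)%N.
exists M; move=> _ [j _ <-].
have key : forall (c : R) w, W w -> `|c| <= M%:R ->
    [set (M%:R : R) *: u | u in U] (c *: w).
  move=> c w Ww cM.
  have [M0|Mpos] := eqVneq M 0%N.
    have c0 : c = 0 by apply/eqP; rewrite -normr_le0; rewrite M0 in cM.
    exists (0 *: w); first by apply: Ww; rewrite normr0 ler01.
    by rewrite c0 !scale0r scaler0.
  exists ((c / M%:R) *: w).
    apply: Ww; rewrite normrM normfV normr_nat ler_pdivrMr ?mul1r //.
    by rewrite ltr0n lt0n.
  by rewrite scalerA mulrCA divff ?mulr1 // pnatr_eq0.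
case: (ltnP k j) => kj.
  have [c cm [w Ww ->]] := Pj j kj.
  by apply: key Ww _; apply: (le_trans cm); rewrite ler_nat leq_addr.
have [w Ww ->] := projT2 (cid (ab j)).
apply: key Ww _; rewrite normr_nat ler_nat.
apply: (leq_trans _ (leq_addl _ _)).
by rewrite (bigD1 (Ordinal (kj : (j < k.+1)%N))) //= leq_addr.
Qed.
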